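(* Fix $2\le d\le7$ and let $(\hat a_*,\hat b_*,\hat c_* )$ be given by: $d=2$: $(0.5,0.7,0.27)$; $d=3$: $(0.4,0.6,0.2)$; $d=4$: $(0.3,0.5,0.1)$; $d=5$: $(0.3,0.4,0.1)$; $d=6$: $(0.27,0.32,0.1)$; $d=7$: $(0.26,0.27,0.01)$. Then for any $0\le c<1$, $\psi^{(k)}(\mathcal{S}_{0,1,c})\subset\mathcal{S}_{\hat a_*,\hat b_*,\hat c_*}$ for all large enough $k$.
   Context: For a probability distribution $z$ on $\mathbb{Z}$ set $A(z)_i=(z_{i-1}+z_i+z_{i+1})^d$, $F(z)=A(z)/\sum_iA(z)_i$. $\mathcal{E}$ is the set of symmetric probability distributions on $\mathbb{Z}$ whose support is an interval or all of $\mathbb{Z}$. $\mathsf R\colon\mathcal{E}\to[0,\infty)^{\{1,2,\dots\}}$, $\mathsf R(z)_i=z_i/z_{i-1}$ if $z_{i-1}\ne0$ and $0$ otherwise; $\mathsf R$ is injective, $\mathcal{R}:=\mathsf R(\mathcal{E})$, $\psi:=\mathsf R\circ F\circ\mathsf R^{-1}\colon\mathcal{R}\to\mathcal{R}$, i.e. $\psi(x)_1=\big(\frac{1+x_1+x_1x_2}{1+2x_1}\big)^d$ and $\psi(x)_n=x_{n-1}^d\big(\frac{1+x_n+x_nx_{n+1}}{1+x_{n-1}+x_{n-1}x_n}\big)^d$ for $n\ge2$; $\psi^{(k)}$ is its $k$-fold iterate. For reals $a,b,c$, $\mathcal{S}_{a,b,c}:=\{x\in\mathcal{R}: a\le x_1\le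 b,\ 0\le x_n\le c\ \forall n\ge2\}$. *)

(* Defs.v *)
From Stdlib Require Import Reals ZArith Lra.
Open Scope R_scope.

(** Probability distributions on Z are functions z : Z -> R.
    The total mass over Z is z 0 + sum_{n>=1} (z n + z (-n)). *)
Definition mass_series (z : Z -> R) (n : nat) : R :=
  match n with
  | O => z 0%Z
  | S m => z (Z.of_nat (S m)) + z (- Z.of_nat (S m))%Z
  end.

Definition is_prob (z : Z -> R) : Prop :=
  (forall i, 0 <= z i) /\ infinite_sum (mass_series z) 1.

Definition symmetric (z : Z -> R) : Prop := forall i, z (- i)%Z = z i.

Definition support_interval (z : Z -> R) : Prop :=
  forall i j k, (i <= j <= k)%Z -> z i <> 0 -> z k <> 0 -> z j <> 0.

Definition in_E (z : Z -> R) : Prop :=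
  is_prob z /\ symmetric z /\ support_interval z.

(** Sequences indexed by {1,2,...} are represented as x : nat -> R, where
    x n is the n-th coordinate for n >= 1; coordinate 0 is unused. *)
Definition Rmap (z : Z -> R) : nat -> R :=
  fun i => match i with
           | O => 0
           | S _ => if Req_EM_T (z (Z.of_nat i - 1)%Z) 0 then 0
                    else z (Z.of_nat i) / z (Z.of_nat i - 1)%Z
           end.

Definition in_calR (x : nat -> R) : Prop :=
  exists z, in_E z /\ forall n, (1 <= n)%nat -> x n = Rmap z n.

Definition psi (d : nat) (x : nat -> R) : nat -> R :=
  fun n => match n with
           | O => 0
           | S O => ((1 + x 1%nat + x 1%nat * x 2%nat) / (1 + 2 * x 1%nat)) ^ d
           | S m => x m ^ d *
                    ((1 + x n + x n * x (S n)) / (1 + x m + x m * x n)) ^ d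
           end.

Definition psi_iter (d k : nat) (x : nat -> R) : nat -> R := Nat.iter k (psi d) x.

Definition in_S (a b c : R) (x : nat -> R) : Prop :=
  in_calR x /\ a <= x 1%nat <= b /\ (forall n, (2 <= n)%nat -> 0 <= x n <= c).

Definition hat_a (d : nat) : R :=
  match d with
  | 2 => 5/10 | 3 => 4/10 | 4 => 3/10 | 5 => 3/10
  | 6 => 27/100 | 7 => 26/100 | _ => 0 end.
Definition hat_b (d : nat) : R :=
  match d with
  | 2 => 7/10 | 3 => 6/10 | 4 => 5/10 | 5 => 4/10
  | 6 => 32/100 | 7 => 27/100 | _ => 0 end.
Definition hat_c (d : nat) : R :=
  match d with
  | 2 => 27/100 | 3 => 2/10 | 4 => 1/10 | 5 => 1/10
  | 6 => 1/10 | 7 => 1/100 | _ => 0 end.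

(* Main.v *)
Require Import Defs.
From Stdlib Require Import Reals QArith Qreals Lra Lia ZArith Qminmax List.
Import ListNotations.
Open Scope R_scope.


Lemma div_nn (p q : R) : 0 <= p -> 0 < q -> 0 <= p / q.
Proof. intros. unfold Rdiv. apply Rmult_le_pos. lra. left. apply Rinv_0_lt_compat. lra. Qed.

Section Z.
Variable z : Z -> R.
Hypothesis Hz : in_E z.

Definition w (n : nat) : R := z (Z.of_nat n).
Definition Pz (N : nat) : R := sum_f_R0 (mass_series z) N.

Lemma z_nn i : 0 <= z i.
Proof. destruct Hz as [[H _] _]. apply H. Qed.

Lemma z_sym i : z (- i)%Z = z i.
Proof. destruct Hz as [_ [H _]]. apply H. Qed.

Lemma mass_z_S m : mass_series z (S m) = 2 * w (S m).
Proof. unfold mass_series, w. rewrite z_sym. ring. Qed.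

Lemma mass_z_nn n : 0 <= mass_series z n.
Proof. destruct n; unfold mass_series. apply z_nn. pose proof (z_nn (Z.of_nat (S n))); pose proof (z_nn (- Z.of_nat (S n))); lra. Qed.

Lemma Pz_growing : Un_growing Pz.
Proof. intro n. unfold Pz. rewrite tech5. pose proof (mass_z_nn (S n)). lra. Qed.

Lemma Pz_le1 N : Pz N <= 1.
Proof. apply growing_ineq. apply Pz_growing. destruct Hz as [[_ H] _]. exact H. Qed.

Lemma w_le1 n : w n <= 1.
Proof.
  destruct n.
  - pose proof (Pz_le1 0). exact H.
  - pose proof (Pz_le1 (S n)). unfold Pz in H. rewrite tech5, mass_z_S in H.
    assert (0 <= sum_f_R0 (mass_series z) n).
    { clear H. induction n. simpl. apply z_nn. rewrite tech5. pose proof (mass_z_nn (S n)). lra. }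
    pose proof (z_nn (Z.of_nat (S n))). unfold w in *. lra.
Qed.

Lemma z_le1 i : z i <= 1.
Proof.
  destruct (Z_le_gt_dec 0 i).
  - replace i with (Z.of_nat (Z.to_nat i)) by lia. apply w_le1.
  - rewrite <- z_sym. replace (- i)%Z with (Z.of_nat (Z.to_nat (- i))) by lia. apply w_le1.
Qed.

Lemma z0_pos : 0 < z 0%Z.
Proof.
  destruct (Req_EM_T (z 0%Z) 0) as [E|E]; [|pose proof (z_nn 0); lra].
  exfalso.
  assert (Hall : forall i, z i = 0).
  { intro i. destruct (Req_EM_T (z i) 0) as [|Ne]; auto.
    destruct Hz as [_ [_ Hint]].
    destruct (Z_le_gt_dec 0 i).
    - exfalso. apply (Hint (- i) 0 i)%Z. lia. rewrite z_sym. exact Ne. exact Ne. exact E.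
    - exfalso. apply (Hint i 0 (- i))%Z. lia. exact Ne. rewrite z_sym. exact Ne. exact E. }
  assert (forall N, Pz N = 0).
  { induction N. unfold Pz. simpl. apply Hall. unfold Pz in *. rewrite tech5, IHN. simpl. rewrite !Hall. ring. }
  destruct Hz as [[_ Hs] _]. destruct (Hs (1/2)) as [N HN]. lra.
  specialize (HN N (Nat.le_refl N)). fold (Pz N) in HN. rewrite H in HN. unfold Rdist in HN.
  rewrite Rabs_left in HN; lra.
Qed.

Lemma w_zero_after m j : w m = 0 -> (m <= j)%nat -> w j = 0.
Proof.
  intros Hm Hj. destruct (Req_EM_T (w j) 0) as [|Ne]; auto. exfalso.
  destruct Hz as [_ [_ Hint]]. apply (Hint 0%Z (Z.of_nat m) (Z.of_nat j)). lia.
  pose proof z0_pos; lra. exact Ne. exact Hm.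
Qed.


Definition sz (i : Z) : R := z (i - 1)%Z + z i + z (i + 1)%Z.

Lemma sz_sym i : sz (- i)%Z = sz i.
Proof.
  unfold sz. replace (- i - 1)%Z with (- (i + 1))%Z by lia.
  replace (- i + 1)%Z with (- (i - 1))%Z by lia. rewrite !z_sym. ring.
Qed.

Lemma sz_S m : sz (Z.of_nat (S m)) = w m + w (S m) + w (S (S m)).
Proof.
  unfold sz, w. replace (Z.of_nat (S m) - 1)%Z with (Z.of_nat m) by lia.
  replace (Z.of_nat (S m) + 1)%Z with (Z.of_nat (S (S m))) by lia. ring.
Qed.

Lemma sz_0 : sz 0%Z = w 0 + 2 * w 1.
Proof.
  unfold sz, w. replace (0 - 1)%Z with (Z.opp 1) by lia. rewrite z_sym. simpl. ring.
Qed.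

Lemma sz_nn i : 0 <= sz i.
Proof. unfold sz. pose proof (z_nn (i-1)); pose proof (z_nn i); pose proof (z_nn (i+1)). lra. Qed.

Lemma sz_le3 i : sz i <= 3.
Proof. unfold sz. pose proof (z_le1 (i-1)); pose proof (z_le1 i); pose proof (z_le1 (i+1)). lra. Qed.

Lemma w_nn n : 0 <= w n.
Proof. apply z_nn. Qed.

Lemma mass_sz N : sum_f_R0 (mass_series sz) N + 2 * w N + 4 * w (S N) = 3 * Pz (S N).
Proof.
  induction N.
  - change (sum_f_R0 (mass_series sz) 0) with (sz 0%Z). unfold Pz. rewrite tech5, mass_z_S.
    change (sum_f_R0 (mass_series z) 0) with (z 0%Z). rewrite sz_0. unfold w. simpl. ring.
  - rewrite tech5. unfold Pz in *. rewrite (tech5 _ (S N)), mass_z_S.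
    unfold mass_series at 2. rewrite sz_sym, sz_S. lra.
Qed.

Variable d : nat.
Hypothesis Hd : (1 <= d)%nat.

Definition Az (i : Z) : R := sz i ^ d.

Lemma Az_nn i : 0 <= Az i.
Proof. unfold Az. apply pow_le. apply sz_nn. Qed.

Lemma Az_le i : Az i <= 3 ^ (d - 1) * sz i.
Proof.
  unfold Az. replace d with (S (d - 1)) at 1 by lia. simpl pow.
  rewrite Rmult_comm. apply Rmult_le_compat_r. apply sz_nn. apply pow_incr.
  split. apply sz_nn. apply sz_le3.
Qed.

Lemma mass_A_nn n : 0 <= mass_series Az n.
Proof. destruct n; unfold mass_series. apply Az_nn. pose proof (Az_nn (Z.of_nat (S n))); pose proof (Az_nn (- Z.of_nat (S n))); lra. Qed.

Lemma mass_A_le n : mass_series Az n <= 3 ^ (d - 1) * mass_series sz n.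
Proof. destruct n; unfold mass_series. apply Az_le. pose proof (Az_le (Z.of_nat (S n))); pose proof (Az_le (- Z.of_nat (S n))); lra. Qed.

Lemma A_conv : { Sa : R | Un_cv (fun N => sum_f_R0 (mass_series Az) N) Sa }.
Proof.
  apply growing_cv.
  - intro n. rewrite tech5. pose proof (mass_A_nn (S n)). lra.
  - exists (3 ^ (d - 1) * 3). intros r [N ->].
    apply Rle_trans with (sum_f_R0 (fun n => mass_series sz n * 3 ^ (d - 1)) N).
    + apply sum_Rle. intros n _. rewrite Rmult_comm. apply mass_A_le.
    + rewrite <- scal_sum. apply Rmult_le_compat_l. left. apply pow_lt. lra.
      pose proof (mass_sz N). pose proof (Pz_le1 (S N)). pose proof (w_nn N). pose proof (w_nn (S N)). lra.
Qed.


Lemma w0_pos : 0 < w 0.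
Proof. apply z0_pos. Qed.

Lemma sz_ne0 i : sz i <> 0 -> z (i - 1)%Z <> 0 \/ z i <> 0 \/ z (i + 1)%Z <> 0.
Proof.
  intro H. unfold sz in H.
  destruct (Req_EM_T (z (i-1)%Z) 0); destruct (Req_EM_T (z i) 0); destruct (Req_EM_T (z (i+1)%Z) 0); try tauto.
  exfalso. apply H. lra.
Qed.

Section F.
Variable Sa : R.
Hypothesis HSa : Un_cv (fun N => sum_f_R0 (mass_series Az) N) Sa.

Lemma Sa_pos : 0 < Sa.
Proof.
  assert (H : sum_f_R0 (mass_series Az) 0 <= Sa).
  { apply (growing_ineq (fun N => sum_f_R0 (mass_series Az) N)). intro n. rewrite tech5. pose proof (mass_A_nn (S n)). lra. exact HSa. }
  simpl in H. unfold Az in H. rewrite sz_0 in H.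
  assert (0 < (w 0 + 2 * w 1) ^ d). apply pow_lt. pose proof w0_pos. pose proof (w_nn 1). lra. lra.
Qed.

Definition Fz (i : Z) : R := Az i / Sa.

Lemma Fz_nn i : 0 <= Fz i.
Proof. unfold Fz. apply div_nn. apply Az_nn. apply Sa_pos. Qed.

Lemma Fz_ne0 i : Fz i <> 0 <-> sz i <> 0.
Proof.
  pose proof Sa_pos. unfold Fz, Az. split.
  - intros H1 H2. apply H1. rewrite H2, pow_i by lia. unfold Rdiv. ring.
  - intros H1 H2. assert (E : sz i ^ d = (sz i ^ d / Sa) * Sa) by (field; lra).
    rewrite H2, Rmult_0_l in E. apply (pow_nonzero _ d H1). exact E.
Qed.

Lemma Fz_E : in_E Fz.
Proof.
  pose proof Sa_pos as HS.
  split; [split|split].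
  - apply Fz_nn.
  - intros eps Heps.
    destruct (HSa (eps * Sa)) as [N HN]. nra.
    exists N. intros n Hn. specialize (HN n Hn).
    assert (E : sum_f_R0 (mass_series Fz) n = sum_f_R0 (mass_series Az) n / Sa).
    { unfold Rdiv. rewrite Rmult_comm, scal_sum. apply sum_eq. intros i _.
      destruct i; unfold mass_series, Fz; unfold Rdiv; ring. }
    rewrite E. unfold Rdist in *.
    replace (sum_f_R0 (mass_series Az) n / Sa - 1) with ((sum_f_R0 (mass_series Az) n - Sa) / Sa) by (field; lra).
    unfold Rdiv. rewrite Rabs_mult, Rabs_inv, (Rabs_right Sa) by lra.
    apply Rmult_lt_reg_r with Sa. lra. rewrite Rmult_assoc, Rinv_l by lra. lra.
  - intro i. unfold Fz, Az. rewrite sz_sym. reflexivity.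
  - intros i j k Hijk Hi Hk. apply Fz_ne0 in Hi, Hk. apply Fz_ne0.
    destruct Hz as [_ [_ Hint]].
    assert (Hi' : exists i', (i - 1 <= i' <= i + 1)%Z /\ z i' <> 0).
    { destruct (sz_ne0 i Hi) as [H|[H|H]]; eexists; split; [|exact H| |exact H| |exact H]; lia. }
    assert (Hk' : exists k', (k - 1 <= k' <= k + 1)%Z /\ z k' <> 0).
    { destruct (sz_ne0 k Hk) as [H|[H|H]]; eexists; split; [|exact H| |exact H| |exact H]; lia. }
    destruct Hi' as [i' [Hi1 Hi2]]. destruct Hk' as [k' [Hk1 Hk2]].
    set (m := Z.min i' k'). set (M := Z.max i' k').
    assert (Hm : z m <> 0) by (unfold m; destruct (Z.min_spec i' k') as [[_ ->]|[_ ->]]; auto).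
    assert (HM : z M <> 0) by (unfold M; destruct (Z.max_spec i' k') as [[_ ->]|[_ ->]]; auto).
    set (j' := Z.max m (Z.min j M)).
    assert (Hj' : z j' <> 0).
    { apply (Hint m j' M). unfold j', m, M. lia. exact Hm. exact HM. }
    intro Hs. unfold sz in Hs.
    pose proof (z_nn (j-1)); pose proof (z_nn j); pose proof (z_nn (j+1)).
    assert (j' = j - 1 \/ j' = j \/ j' = j + 1)%Z by (unfold j', m, M; lia).
    destruct H2 as [ -> | [ -> | -> ] ]; apply Hj'; lra.
Qed.


Lemma Rmap_z_S m : Rmap z (S m) = if Req_EM_T (w m) 0 then 0 else w (S m) / w m.
Proof. unfold Rmap, w. replace (Z.of_nat (S m) - 1)%Z with (Z.of_nat m) by lia. reflexivity. Qed.

Lemma Rmap_F_S m : Rmap Fz (S m) =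
  if Req_EM_T (Fz (Z.of_nat m)) 0 then 0 else Fz (Z.of_nat (S m)) / Fz (Z.of_nat m).
Proof. unfold Rmap. replace (Z.of_nat (S m) - 1)%Z with (Z.of_nat m) by lia. reflexivity. Qed.

Lemma ratio p q : q <> 0 -> (p ^ d / Sa) / (q ^ d / Sa) = (p / q) ^ d.
Proof.
  intro Hq. pose proof Sa_pos. pose proof (pow_nonzero q d Hq).
  assert (E : (p / q) ^ d * q ^ d = p ^ d) by (rewrite <- Rpow_mult_distr; f_equal; field; auto).
  rewrite <- E. field. split; auto. lra.
Qed.

Lemma x2_prod m : w m <> 0 ->
  Rmap z (S m) * Rmap z (S (S m)) = w (S (S m)) / w m.
Proof.
  intro Hm. rewrite !Rmap_z_S.
  destruct (Req_EM_T (w m) 0) as [|_]; [contradiction|].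
  destruct (Req_EM_T (w (S m)) 0) as [E|E].
  - rewrite (w_zero_after (S m) (S (S m)) E) by lia. rewrite E. unfold Rdiv. ring.
  - field. auto.
Qed.

Lemma Rmap_psi n : (1 <= n)%nat -> Rmap Fz n = psi d (Rmap z) n.
Proof.
  intro Hn. pose proof w0_pos as Hw0. pose proof Sa_pos as HS.
  destruct n as [|[|m]]; [lia| |].
  - rewrite Rmap_F_S.
    destruct (Req_EM_T (Fz (Z.of_nat 0)) 0) as [E|E].
    { exfalso. apply Fz_ne0 in E. apply E. simpl. rewrite sz_0. pose proof (w_nn 1). unfold w in *. simpl in *. lra. }
    unfold Fz, Az. rewrite ratio.
    2: { simpl. rewrite sz_0. pose proof (w_nn 1). unfold w in *. simpl in *. lra. }
    unfold psi. f_equal.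
    rewrite x2_prod by lra. rewrite Rmap_z_S.
    destruct (Req_EM_T (w 0) 0) as [|_]; [lra|].
    change (Z.of_nat 0) with 0%Z. rewrite sz_0. change (Z.of_nat 1) with (Z.of_nat (S 0)). rewrite sz_S.
    pose proof (w_nn 1). field. split; lra.
  - rewrite Rmap_F_S. unfold psi.

    destruct (Req_EM_T (w m) 0) as [Em|Em].
    + assert (m <> 0%nat) by (intro; subst; lra).
      destruct (Req_EM_T (Fz (Z.of_nat (S m))) 0) as [E|E].
      2: { exfalso. apply Fz_ne0 in E. apply E. rewrite sz_S.
           rewrite Em, (w_zero_after m (S m) Em), (w_zero_after m (S (S m)) Em) by lia. ring. }
      rewrite Rmap_z_S. destruct (Req_EM_T (w m) 0) as [_|]; [|contradiction].
      rewrite pow_i by lia. ring.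
    + destruct (Req_EM_T (Fz (Z.of_nat (S m))) 0) as [E|E].
      { exfalso. apply Fz_ne0 in E. apply E. rewrite sz_S.
        pose proof (w_nn m); pose proof (w_nn (S m)); pose proof (w_nn (S (S m))). lra. }
      unfold Fz, Az. rewrite ratio.
      2: { rewrite sz_S. pose proof (w_nn m); pose proof (w_nn (S m)); pose proof (w_nn (S (S m))). lra. }
      rewrite <- Rpow_mult_distr. f_equal.
      rewrite !sz_S.
      destruct (Req_EM_T (w (S m)) 0) as [E1|E1].
      * rewrite Rmap_z_S. destruct (Req_EM_T (w m) 0) as [|_]; [contradiction|].
        rewrite E1, (w_zero_after (S m) (S (S m)) E1), (w_zero_after (S m) (S (S (S m))) E1) by lia.
        unfold Rdiv. ring.
      * rewrite (x2_prod (S m) E1), (x2_prod m Em).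
        rewrite (Rmap_z_S (S m)), (Rmap_z_S m).
        destruct (Req_EM_T (w m) 0) as [|_]; [contradiction|].
        destruct (Req_EM_T (w (S m)) 0) as [|_]; [contradiction|].
        pose proof (w_nn m); pose proof (w_nn (S m)); pose proof (w_nn (S (S m))); pose proof (w_nn (S (S (S m)))).
        field. repeat split; try lra. 
Qed.

End F.
End Z.
Definition boxR (a b c : R) (x : nat -> R) : Prop :=
  a <= x 1%nat <= b /\ forall n, (2 <= n)%nat -> 0 <= x n <= c.

Lemma div_le_div (p q r s : R) : 0 < q -> 0 < s -> p * s <= r * q -> p / q <= r / s.
Proof.
  intros Hq Hs H. unfold Rdiv.
  apply Rmult_le_reg_r with (q * s). nra.
  replace (p * / q * (q * s)) with (p * s) by (field; lra).
  replace (r * / s * (q * s)) with (r * q) by (field; lra). lra.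
Qed.



Lemma pow_up (y N D c' : R) (d : nat) : 0 <= y <= N / D -> 0 < D ->
  N ^ d <= c' * D ^ d -> y ^ d <= c'.
Proof.
  intros Hy HD H.
  assert (HDd : 0 < D ^ d) by (apply pow_lt; lra).
  assert (E : (N / D) ^ d * D ^ d = N ^ d).
  { rewrite <- Rpow_mult_distr. f_equal. field. lra. }
  apply Rle_trans with ((N / D) ^ d). apply pow_incr; lra.
  apply Rmult_le_reg_r with (D ^ d). exact HDd. lra.
Qed.

Lemma pow_low (y N D a' : R) (d : nat) : 0 <= N / D <= y -> 0 < D ->
  a' * D ^ d <= N ^ d -> a' <= y ^ d.
Proof.
  intros Hy HD H.
  assert (HDd : 0 < D ^ d) by (apply pow_lt; lra).
  assert (E : (N / D) ^ d * D ^ d = N ^ d).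
  { rewrite <- Rpow_mult_distr. f_equal. field. lra. }
  apply Rle_trans with ((N / D) ^ d).
  apply Rmult_le_reg_r with (D ^ d). exact HDd. lra.
  apply pow_incr; lra.
Qed.

Lemma g_low (x1 x2 b : R) : 0 <= x1 <= b -> 0 <= x2 ->
  0 <= (1 + b) / (1 + 2 * b) <= (1 + x1 + x1 * x2) / (1 + 2 * x1).
Proof.
  intros. split. apply div_nn; lra.
  apply div_le_div; try lra.
  assert (0 <= x1 * x2 * (1 + 2 * b)) by (apply Rmult_le_pos; nra). nra.
Qed.

Lemma g_up (x1 x2 a c : R) : 0 <= a <= x1 -> 0 <= x2 <= c -> c <= 1 ->
  0 <= (1 + x1 + x1 * x2) / (1 + 2 * x1) <= (1 + a + a * c) / (1 + 2 * a).
Proof.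
  intros. split. apply div_nn; nra.
  apply div_le_div; try lra.
  assert (x1 * x2 <= x1 * c) by nra.
  assert ((1 + x1 + x1 * c) * (1 + 2 * a) <= (1 + a + a * c) * (1 + 2 * x1)) by nra.
  nra.
Qed.

Lemma f_up (p q r M c : R) : 0 <= p <= M -> 0 <= q <= c -> 0 <= r <= c ->
  0 <= p * (1 + q + q * r) / (1 + p + p * q) <= M * (1 + c + c * c) / (1 + M + M * c).
Proof.
  intros Hp Hq Hr.
  assert (0 <= p * q) by nra. assert (0 <= q * r) by nra. assert (0 <= p * c) by nra.
  assert (0 <= M * c) by nra.
  split. apply div_nn. apply Rmult_le_pos; nra. nra.
  apply Rle_trans with (p * (1 + q + q * c) / (1 + p + p * q)).
  { apply div_le_div; [nra|nra|]. assert (0 <= p * q * (c - r) * (1 + p + p * q)).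
    { repeat apply Rmult_le_pos; nra. } nra. }
  apply Rle_trans with (p * (1 + c + c * c) / (1 + p + p * c)).
  { apply div_le_div; [nra|nra|]. assert (0 <= p * (c - q) * (1 + c + p * c)).
    { repeat apply Rmult_le_pos; nra. } nra. }
  apply div_le_div; [nra|nra|]. assert (0 <= (M - p) * (1 + c + c * c)).
  { repeat apply Rmult_le_pos; nra. } nra.
Qed.

Lemma step_R (d : nat) (a b c a' b' c' : R) (x : nat -> R) :
  0 <= a -> a <= b -> b <= 1 -> 0 <= c -> c <= 1 ->
  a' * (1 + 2 * b) ^ d <= (1 + b) ^ d ->
  (1 + a + a * c) ^ d <= b' * (1 + 2 * a) ^ d ->
  (b * (1 + c + c * c)) ^ d <= c' * (1 + b + b * c) ^ d ->
  (c * (1 + c + c * c)) ^ d <= c' * (1 + c + c * c) ^ d ->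
  boxR a b c x -> boxR a' b' c' (psi d x).
Proof.
  intros Ha Hab Hb1 Hc Hc1 H1 H2 H3 H4 [Hx1 Hxn].
  assert (Hx2 := Hxn 2%nat ltac:(lia)).
  split.
  - simpl psi. split.
    + apply pow_low with (1 + b) (1 + 2 * b); [|lra|exact H1].
      apply g_low; lra.
    + apply pow_up with (1 + a + a * c) (1 + 2 * a); [|lra|exact H2].
      apply g_up; lra.
  - intros n Hn. destruct n as [|[|m]]; [lia|lia|].
    assert (Hq := Hxn (S (S m)) ltac:(lia)).
    assert (Hr := Hxn (S (S (S m))) ltac:(lia)).
    assert (Hp : 0 <= x (S m) <= Rmax b c).
    { destruct m. pose proof (Rmax_l b c); lra.
      pose proof (Hxn (S (S m)) ltac:(lia)). pose proof (Rmax_r b c); lra. }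
    cbv beta iota delta [psi].
    set (p := x (S m)) in *. set (q := x (S (S m))) in *. set (r := x (S (S (S m)))) in *.
    rewrite <- Rpow_mult_distr.
    assert (E : p * ((1 + q + q * r) / (1 + p + p * q)) = p * (1 + q + q * r) / (1 + p + p * q)).
    { unfold Rdiv. ring. }
    rewrite E.
    assert (Hf := f_up p q r (Rmax b c) c Hp Hq Hr).
    split. apply pow_le. lra.
    apply pow_up with (Rmax b c * (1 + c + c * c)) (1 + Rmax b c + Rmax b c * c).
    exact Hf. pose proof (Rmax_l b c). nra.
    unfold Rmax; destruct (Rle_dec b c); assumption.
Qed.


Lemma box_weaken a b c a' b' c' x : a' <= a -> b <= b' -> c <= c' -> boxR a b c x -> boxR a' b' c' x.
Proof. intros H1 H2 H3 [Hx Hn]. split. lra. intros n h; specialize (Hn n h); lra. Qed.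

Definition lam : R := 21/20.

Lemma t_bound (c : R) : 0 <= c <= 1 ->
  ((1 + c + c * c) / (2 + c)) ^ 2 <= Rmax (3/5) (1 - lam * (1 - c)).
Proof.
  intros Hc. unfold lam.
  set (t := (1 + c + c * c) / (2 + c)).
  assert (Ht : t * (2 + c) = 1 + c + c * c) by (unfold t; field; lra).
  assert (Ht0 : 0 <= t) by (unfold t; apply div_nn; nra).
  destruct (Rle_dec c (3/5)).
  - apply Rle_trans with (3/5); [|apply Rmax_l].
    assert (1 + c + c * c <= 387/500 * (2 + c)) by nra.
    assert (t <= 387/500) by nra. simpl. nra.
  - apply Rle_trans with (1 - 21/20 * (1 - c)); [|apply Rmax_r].
    assert (Hp : 0 <= (1 - c) * (c*c*c + 195/100*c*c + 8/10*c - 12/10)).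
    { apply Rmult_le_pos. lra. nra. }
    assert (E : (1 + c + c*c) * (1 + c + c*c) <= (21/20 * c - 1/20) * ((2 + c) * (2 + c))) by nra.
    assert (t * t * ((2 + c) * (2 + c)) <= (21/20 * c - 1/20) * ((2 + c) * (2 + c))).
    { replace (t * t * ((2 + c) * (2 + c))) with ((t * (2 + c)) * (t * (2 + c))) by ring.
      rewrite Ht. exact E. }
    simpl. rewrite Rmult_1_r.
    apply Rmult_le_reg_r with ((2 + c) * (2 + c)). nra. nra.
Qed.

Lemma cphase_step d c x : (2 <= d)%nat -> 0 <= c <= 1 -> boxR 0 1 c x ->
  boxR 0 1 (Rmax (3/5) (1 - lam * (1 - c))) (psi d x).
Proof.
  intros Hd Hc Hx.
  set (C := Rmax (3/5) (1 - lam * (1 - c))).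
  set (t := (1 + c + c * c) / (2 + c)).
  assert (Ht : t * (2 + c) = 1 + c + c * c) by (unfold t; field; lra).
  assert (Ht0 : 0 <= t) by (unfold t; apply div_nn; nra).
  assert (Ht1 : t <= 1) by (apply Rmult_le_reg_r with (2 + c); nra).
  assert (Hpow : forall y, 0 <= y <= 1 -> y ^ d <= y ^ 2).
  { intros y Hy. replace d with ((d - 2) + 2)%nat by lia. rewrite pow_add.
    assert (y ^ (d - 2) <= 1) by (rewrite <- (pow1 (d - 2)); apply pow_incr; lra). assert (0 <= y ^ 2) by (apply pow_le; lra). nra. }
  assert (HtC : t ^ d <= C) by (apply Rle_trans with (t ^ 2); [apply Hpow; lra|apply t_bound; lra]).
  assert (HcC : c ^ d <= C).
  { apply Rle_trans with (c ^ 2). apply Hpow; lra. unfold C, lam.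
    destruct (Rle_dec c (3/5)). apply Rle_trans with (3/5); [simpl; nra|apply Rmax_l].
    apply Rle_trans with (1 - 21/20 * (1 - c)); [simpl; nra|apply Rmax_r]. }
  apply step_R with 0 1 c; try lra.
  - rewrite Rmult_0_l. apply pow_le; lra.
  - rewrite !Rmult_0_l, !Rplus_0_r, Rmult_0_r, Rplus_0_r, pow1. lra.
  - rewrite Rmult_1_l. replace (1 + 1 + 1 * c) with (2 + c) by ring. rewrite <- Ht, Rpow_mult_distr.
    apply Rmult_le_compat_r. apply pow_le; lra. exact HtC.
  - rewrite Rpow_mult_distr. apply Rmult_le_compat_r. apply pow_le; nra. exact HcC.
  - exact Hx.
Qed.

Definition cK (c : R) (k : nat) : R := Rmax (3/5) (1 - lam ^ k * (1 - c)).

Lemma cphase d c x : (2 <= d)%nat -> 0 <= c <= 1 -> boxR 0 1 c x ->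
  forall k, boxR 0 1 (cK c k) (Nat.iter k (psi d) x).
Proof.
  intros Hd Hc Hx k. induction k.
  - simpl. apply box_weaken with 0 1 c; try lra. unfold cK. simpl.
    apply Rle_trans with (1 - 1 * (1 - c)). lra. apply Rmax_r. exact Hx.
  - rewrite Nat.iter_succ.
    assert (Hl : 1 <= lam ^ k) by (apply pow_R1_Rle; unfold lam; lra).
    assert (H0 : 0 <= cK c k <= 1).
    { unfold cK, Rmax. destruct (Rle_dec (3/5) (1 - lam ^ k * (1 - c))); nra. }
    apply box_weaken with 0 1 (Rmax (3/5) (1 - lam * (1 - cK c k))); try lra.
    2: apply cphase_step; assumption.
    unfold cK. simpl pow.
    unfold Rmax at 2. destruct (Rle_dec (3/5) (1 - lam ^ k * (1 - c))).
    + replace (1 - lam * (1 - (1 - lam ^ k * (1 - c)))) with (1 - lam * lam ^ k * (1 - c)) by ring.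
      apply Rle_refl.
    + unfold Rmax at 1. destruct (Rle_dec (3/5) (1 - lam * (1 - 3/5))); unfold lam in *. lra.
      apply Rmax_l.
Qed.

Lemma bernoulli k : 1 + INR k / 20 <= lam ^ k.
Proof.
  induction k. simpl; lra.
  rewrite S_INR. simpl pow. unfold lam in *.
  assert (0 <= INR k) by apply pos_INR. nra.
Qed.

Lemma cphase_K c : 0 <= c < 1 -> exists K0, forall k, (K0 <= k)%nat -> cK c k = 3/5.
Proof.
  intros Hc.
  destruct (archimed (8 / (1 - c))) as [H1 _].
  assert (Hpos : 0 < 8 / (1 - c)) by (apply Rdiv_pos_pos; lra).
  exists (Z.to_nat (up (8 / (1 - c)))). intros k Hk.
  assert (HK : 8 / (1 - c) <= INR k).
  { apply Rle_trans with (INR (Z.to_nat (up (8 / (1 - c))))).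
    rewrite INR_IZR_INZ, Z2Nat.id. lra. apply le_IZR. lra.
    apply le_INR. exact Hk. }
  assert (E : 8 / (1 - c) * (1 - c) = 8) by (field; lra).
  pose proof (bernoulli k).
  assert (lam ^ k * (1 - c) >= 2/5) by nra.
  unfold cK, Rmax. destruct (Rle_dec (3/5) (1 - lam ^ k * (1 - c))); lra.
Qed.

Fixpoint qpow (q : Q) (n : nat) : Q := match n with O => 1%Q | S n => (q * qpow q n)%Q end.
Definition qbox := (Q * Q * Q)%type.
Definition qvalid (d : nat) (B B' : qbox) : bool :=
  let '(a, b, c) := B in let '(a', b', c') := B' in
  Qle_bool 0 a && Qle_bool a b && Qle_bool b 1 && Qle_bool 0 c && Qle_bool c 1 &&
  Qle_bool (a' * qpow (1 + 2 * b) d) (qpow (1 + b) d) &&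
  Qle_bool (qpow (1 + a + a * c) d) (b' * qpow (1 + 2 * a) d) &&
  Qle_bool (qpow (b * (1 + c + c * c)) d) (c' * qpow (1 + b + b * c) d) &&
  Qle_bool (qpow (c * (1 + c + c * c)) d) (c' * qpow (1 + c + c * c) d).
Definition hatq (d : nat) : qbox :=
  match d with
  | 2%nat => (5#10, 7#10, 27#100) | 3%nat => (4#10, 6#10, 2#10) | 4%nat => (3#10, 5#10, 1#10)
  | 5%nat => (3#10, 4#10, 1#10) | 6%nat => (27#100, 32#100, 1#10) | 7%nat => (26#100, 27#100, 1#100)
  | _ => (0%Q, 0%Q, 0%Q) end.
Definition qinside (B H : qbox) : bool :=
  let '(a, b, c) := B in let '(ha, hb, hc) := H in
  Qle_bool ha a && Qle_bool b hb && Qle_bool c hc.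
Fixpoint qchain (d : nat) (B : qbox) (l : list qbox) : bool :=
  match l with
  | nil => qinside B (hatq d)
  | B' :: l' => qvalid d B B' && qchain d B' l'
  end.
Definition B0 : qbox := (0, 1, 3#5)%Q.
Lemma qpow_R q n : Q2R (qpow q n) = Q2R q ^ n.
Proof. induction n; simpl. apply RMicromega.Q2R_1. rewrite Q2R_mult, IHn. reflexivity. Qed.
Lemma Q2R_2 : Q2R 2 = 2.
Proof. unfold Q2R; simpl; lra. Qed.

Ltac qR := repeat (rewrite ?Q2R_mult, ?Q2R_plus, ?qpow_R, ?Q2R_2, ?RMicromega.Q2R_1, ?RMicromega.Q2R_0 in *).

Lemma qvalid_sound d a b c a' b' c' x :
  qvalid d (a, b, c) (a', b', c') = true ->
  boxR (Q2R a) (Q2R b) (Q2R c) x -> boxR (Q2R a') (Q2R b') (Q2R c') (psi d x).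
Proof.
  unfold qvalid. intros H.
  repeat match type of H with (_ && _)%bool = true => apply andb_prop in H; destruct H as [H ?] end.
  repeat match goal with h : Qle_bool _ _ = true |- _ => apply RMicromega.Qle_true in h end.
  qR. apply step_R; assumption.
Qed.

Lemma qchain_sound d l : forall B x, qchain d B l = true ->
  boxR (Q2R (fst (fst B))) (Q2R (snd (fst B))) (Q2R (snd B)) x ->
  boxR (Q2R (fst (fst (hatq d)))) (Q2R (snd (fst (hatq d)))) (Q2R (snd (hatq d))) (Nat.iter (length l) (psi d) x).
Proof.
  induction l as [|B' l IH]; intros [[a b] c] x H Hx.
  - change (qinside (a,b,c) (hatq d) = true) in H. simpl. destruct (hatq d) as [[ha hb] hc]. simpl in *.
    unfold qinside in H.
    repeat match type of H with (_ && _)%bool = true => apply andb_prop in H; destruct H as [H ?] end.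
    repeat match goal with h : Qle_bool _ _ = true |- _ => apply RMicromega.Qle_true in h end.
    destruct Hx as [Hx1 Hxn]. split. lra. intros n Hn. specialize (Hxn n Hn). lra.
  - change (qvalid d (a,b,c) B' && qchain d B' l = true)%bool in H.
    destruct B' as [[a' b'] c'].
    apply andb_prop in H. destruct H as [H1 H2].
    change (length ((a', b', c') :: l)) with (S (length l)).
    rewrite Nat.iter_succ_r. apply IH with (a', b', c'). exact H2.
    simpl. apply qvalid_sound with a b c. exact H1. exact Hx.
Qed.

Lemma hat_ok d : (2 <= d <= 7)%nat ->
  Q2R (fst (fst (hatq d))) = hat_a d /\ Q2R (snd (fst (hatq d))) = hat_b d /\ Q2R (snd (hatq d)) = hat_c d.
Proof.
  intros Hd. destruct d as [|[|[|[|[|[|[|[|d]]]]]]]]; try lia; unfold Q2R; simpl; repeat split; lra.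
Qed.

Definition cert2 : list qbox := [((119304647#268435456),(1#1),(610190325#1073741824)); ((119304647#268435456),(433339697#536870912),(36390065#67108864)); ((513069197#1073741824),(854903111#1073741824),(468090157#1073741824)); ((515474265#1073741824),(798175229#1073741824),(391750619#1073741824)); ((263870313#536870912),(382831409#536870912),(41005457#134217728)); ((133830927#268435456),(367952425#536870912),(286539447#1073741824)); ((271327409#536870912),(716675151#1073741824),(258719477#1073741824))].
Definition cert3 : list qbox := [((318145725#1073741824),(1#1),(459989629#1073741824)); ((318145725#1073741824),(191580097#268435456),(78507967#268435456)); ((188909105#536870912),(351542365#536870912),(17969835#134217728)); ((98733959#268435456),(594462507#1073741824),(87070981#1073741824)); ((430314289#1073741824),(140170621#268435456),(3587385#67108864))].
Definition cert4 : list qbox := [((106048575#536870912),(1#1),(346761413#1073741824)); ((106048575#536870912),(358757655#536870912),(76507237#536870912)); ((139526443#536870912),(639786105#1073741824),(40475973#1073741824)); ((37727245#134217728),(523076233#1073741824),(23006607#1073741824)); ((345672467#1073741824),(494814149#1073741824),(13109829#1073741824))].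
Definition cert5 : list qbox := [((35349525#268435456),(1#1),(130702379#536870912)); ((35349525#268435456),(712084993#1073741824),(35444027#536870912)); ((100272321#536870912),(80426579#134217728),(3338601#268435456)); ((218708135#1073741824),(261059775#536870912),(8248545#1073741824)); ((130387353#536870912),(494583967#1073741824),(258195#67108864)); ((136348431#536870912),(441521329#1073741824),(3393565#1073741824)); ((298968343#1073741824),(214178693#536870912),(2280831#1073741824)); ((306261743#1073741824),(401822909#1073741824),(2040519#1073741824)); ((161024305#536870912),(394990825#1073741824),(809579#536870912)); ((326366999#1073741824),(190464483#536870912),(379715#268435456))].
Definition cert6 : list qbox := [((11783175#134217728),(1#1),(197058971#1073741824)); ((11783175#134217728),(184037663#268435456),(32220857#1073741824)); ((138554929#1073741824),(21370131#33554432),(5426157#1073741824)); ((149462939#1073741824),(562875177#1073741824),(1897563#536870912)); ((91120835#536870912),(539048063#1073741824),(7039#4194304)); ((95165437#536870912),(238477065#536870912),(753501#536870912)); ((214833365#1073741824),(231709155#536870912),(914397#1073741824)); ((220943401#1073741824),(106513905#268435456),(809051#1073741824)); ((239528189#1073741824),(208753263#536870912),(70765#134217728)); ((244173635#1073741824),(196586863#536870912),(259143#536870912)); ((32287753#134217728),(48432113#134217728),(398931#1073741824)); ((32728755#134217728),(23180843#67108864),(373849#1073741824)); ((272540075#1073741824),(366940889#1073741824),(307979#1073741824)); ((275208549#1073741824),(177681687#536870912),(293511#1073741824)); ((283290259#1073741824),(22035855#67108864),(63537#268435456)); ((285298915#1073741824),(344345263#1073741824),(61307#268435456)); ((2913684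67#1073741824),(171175055#536870912),(220343#1073741824))].
Definition cert7 : list qbox := [((3927725#67108864),(1#1),(37138037#268435456)); ((3927725#67108864),(777068475#1073741824),(14620793#1073741824)); ((46149387#536870912),(92574323#134217728),(652925#268435456)); ((381971#4194304),(630806747#1073741824),(2047979#1073741824)); ((59246783#536870912),(613298807#1073741824),(1029361#1073741824)); ((30631989#268435456),(138380001#268435456),(904863#1073741824)); ((69149077#536870912),(271449371#536870912),(567967#1073741824)); ((35367665#268435456),(504201627#1073741824),(518449#1073741824)); ((77078457#536870912),(496920945#1073741824),(366007#1073741824)); ((78380639#536870912),(234670837#536870912),(42653#134217728)); ((41833835#268435456),(231983605#536870912),(258983#1073741824)); ((169536099#1073741824),(443078953#1073741824),(61185#268435456)); ((5580239#33554432),(438911475#1073741824),(195083#1073741824)); ((90232891#536870912),(422419453#1073741824),(23263#134217728)); ((94158211#536870912),(419073693#1073741824),(153687#1073741824)); ((189978213#1073741824),(202828581#536870912),(18455#134217728)); ((98445769#536870912),(201450775#536870912),(62617#536870912)); ((99181403#536870912),(391740289#1073741824),(120955#1073741824)); ((25563843#134217728),(389426251#1073741824),(26195#268435456)); ((25728063#134217728),(379980429#1073741824),(101633#1073741824)); ((211333087#1073741824),(378007663#1073741824),(5597#67108864)); ((106256981#536870912),(92476321#268435456),(87167#1073741824)); ((217478555#1073741824),(46025405#134217728),(19473#268435456)); ((218545449#1073741824),(361178203#1073741824),(76039#1073741824)); ((55760051#268435456),(359695557#1073741824),(34379#536870912)); ((112004001#536870912),(353551499#1073741824),(67289#1073741824));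 ((14255747#67108864),(88062459#268435456),(7683#134217728)); ((57243159#268435456),(346837997#1073741824),(7535#134217728)); ((116346885#536870912),(345687861#1073741824),(55547#1073741824)); ((116748587#536870912),(170446485#536870912),(27289#536870912)); ((236895223#1073741824),(339871297#1073741824),(6335#134217728)); ((237629561#1073741824),(335602267#1073741824),(49877#1073741824)); ((30092245#134217728),(41836333#134217728),(23315#536870912)); ((241410197#1073741824),(330874281#1073741824),(22979#536870912)); ((122128745#536870912),(82514461#268435456),(21613#536870912)); ((244873611#1073741824),(326634359#1073741824),(42657#1073741824)); ((247484475#1073741824),(325900843#1073741824),(20169#536870912)); ((62012421#268435456),(161410425#536870912),(19927#536870912)); ((250445687#1073741824),(5033751#16777216),(18935#536870912)); ((250964557#1073741824),(159691111#536870912),(37455#1073741824)); ((253164729#1073741824),(39848199#134217728),(35747#1073741824)); ((253641311#1073741824),(316274949#1073741824),(35387#1073741824)); ((63915645#268435456),(315735189#1073741824),(8477#268435456)); ((256100491#1073741824),(313461917#1073741824),(8399#268435456)); ((64489505#268435456),(312972785#1073741824),(32307#1073741824)); ((258360509#1073741824),(310911217#1073741824),(16017#536870912)); ((65016989#268435456),(310467321#1073741824),(15453#536870912)); ((65109489#268435456),(308595213#1073741824),(30667#1073741824)); ((65501921#268435456),(38523983#134217728),(7419#268435456)); ((131173929#536870912),(306489813#1073741824),(29465#1073741824)); ((65947775#268435456),(306122907#1073741824),(14295#536870912)); ((4126623#16777216),(304573889#1073741824),(7101#268435456)); ((132715435#536870912),(38029977#134217728),(13815#536870912)); ((265718451#1073741824),(302828821#1073741824),(27465#1073741824));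 ((133469283#536870912),(37815549#134217728),(26777#1073741824)); ((66800745#268435456),(301238125#1073741824),(13315#536870912)); ((268324785#1073741824),(75240127#268435456),(26017#1073741824)); ((16785493#67108864),(299787147#1073741824),(12943#536870912)); ((269599249#1073741824),(299533819#1073741824),(25339#1073741824)); ((269822745#1073741824),(298462815#1073741824),(12611#536870912)); ((135385443#536870912),(149115761#536870912),(6183#268435456)); ((67744085#268435456),(297253433#1073741824),(24627#1073741824)); ((271847903#1073741824),(148521077#536870912),(6047#268435456)); ((68009189#268435456),(148074253#536870912),(12047#536870912)); ((272837853#1073741824),(295955425#1073741824),(23699#1073741824)); ((136505715#536870912),(295138593#1073741824),(11807#536870912)); ((34218461#134217728),(147481037#536870912),(23259#1073741824)); ((34238401#134217728),(18388449#67108864),(11591#536870912)); ((1072593#4194304),(294053753#1073741824),(11431#536870912)); ((274730395#1073741824),(293370595#1073741824),(22793#1073741824)); ((275352109#1073741824),(293222917#1073741824),(22503#1073741824)); ((137743399#536870912),(292597875#1073741824),(22441#1073741824)); ((138029011#536870912),(292462741#1073741824),(22179#1073741824)); ((276181767#1073741824),(72972681#268435456),(22123#1073741824)); ((138353275#536870912),(1139715#4194304),(10943#536870912)); ((276820229#1073741824),(291243431#1073741824),(21835#1073741824)); ((277302301#1073741824),(291130201#1073741824),(5405#268435456)); ((277406723#1073741824),(290650805#1073741824),(10787#536870912)); ((17365595#67108864),(290547127#1073741824),(21379#1073741824)); ((138972715#536870912),(290108131#1073741824),(21337#1073741824)); ((69588029#268435456),(145006591#536870912),(2645#134217728)); ((278440201#1073741824),(289611115#1073741824),(10561#536870912));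 ((139406845#536870912),(289524147#1073741824),(20961#1073741824)); ((278894581#1073741824),(289155849#1073741824),(10463#536870912)); ((279237555#1073741824),(289076179#1073741824),(5195#268435456))].

Lemma chk_all d : (2 <= d <= 7)%nat -> exists l, qchain d B0 l = true.
Proof.
  intros Hd. destruct d as [|[|[|[|[|[|[|[|d]]]]]]]]; try lia.
  exists cert2; vm_compute; reflexivity.
  exists cert3; vm_compute; reflexivity.
  exists cert4; vm_compute; reflexivity.
  exists cert5; vm_compute; reflexivity.
  exists cert6; vm_compute; reflexivity.
  exists cert7; vm_compute; reflexivity.
Qed.

Lemma psi_calR d x : (1 <= d)%nat -> in_calR x -> in_calR (psi d x).
Proof.
  intros Hd [z [HzE Hx]].
  destruct (A_conv z HzE d Hd) as [Sa HSa].
  exists (Fz z d Sa). split. apply Fz_E; assumption.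
  intros n Hn. rewrite Rmap_psi by assumption.
  destruct n as [|[|m]]; [lia| |]; unfold psi; rewrite !Hx by lia; reflexivity.
Qed.

Theorem proposition2p8 (d : nat) (c : R) :
  (2 <= d <= 7)%nat -> 0 <= c < 1 ->
  exists K : nat, forall k : nat, (K <= k)%nat ->
    forall x : nat -> R, in_S 0 1 c x ->
      in_S (hat_a d) (hat_b d) (hat_c d) (psi_iter d k x).
Proof.
  intros Hd Hc.
  destruct (cphase_K c Hc) as [K0 HK0].
  destruct (chk_all d Hd) as [l HN]. set (N := length l).
  exists (N + K0)%nat. intros k Hk x [HR Hx].
  assert (Hy : boxR 0 1 (3/5) (Nat.iter (k - N) (psi d) x)).
  { rewrite <- (HK0 (k - N)%nat) by lia. apply cphase; [lia|lra|exact Hx]. }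
  assert (Hz : boxR (Q2R (fst (fst (hatq d)))) (Q2R (snd (fst (hatq d)))) (Q2R (snd (hatq d)))
                 (Nat.iter N (psi d) (Nat.iter (k - N) (psi d) x))).
  { apply qchain_sound with B0. exact HN. unfold B0. simpl.
    rewrite RMicromega.Q2R_0, RMicromega.Q2R_1.
    replace (Q2R (3 # 5)) with (3/5) by (unfold Q2R; simpl; lra). exact Hy. }
  destruct (hat_ok d Hd) as [E1 [E2 E3]]. rewrite E1, E2, E3 in Hz.
  unfold psi_iter. replace k with (N + (k - N))%nat by lia. rewrite Nat.iter_add.
  split.
  - rewrite <- Nat.iter_add. apply Nat.iter_invariant. intros y Hy'. apply psi_calR. lia. exact Hy'. exact HR.
  - exact Hz.
Qed.
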